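(* Let $\Gamma$ be a reduct of $\mathbb{P}$ in which $<$ and $\bot$ are primitive positive definable. Let $f\in{\rm Pol}(\Gamma)$ be a binary polymorphism which is canonical as a function from $(P;\leq,\prec)^2$ to $(P;\leq)$. Then at least one of the following holds: $f$ is dominated; ${\rm Pol}(\Gamma)$ contains $e_<$; ${\rm Pol}(\Gamma)$ contains $e_\leq$.
   Context: $\mathbb{P}=(P;\leq)$ is the random partial order (Fraïssé limit of all finite partial orders); $x<y$ means $x\leq y\wedge x\ne y$, $x\bot y$ means $x,y$ incomparable. A reduct of $\mathbb{P}$ is a structure on $P$ with relations first-order definable in $\mathbb{P}$; primitive positive definable means definable by $\exists\bar y$ (conjunction of atomic formulas). ${\rm Pol}(\Gamma)$ is the set of all finitary operations on $P$ preserving all relations of $\Gamma$ (componentwise). $(P;\leq,\prec)$ denotes the Fraïssé limit of the class of finite structures $(A;\leq,\prec)$ where $\leq$ is a partial order and $\prec$ a linear order extending $<$; its $\leq$-reduct is identified with $\mathbb{P}$. A binary $f:P^2\to P$ is canonical from $(P;\leq,\prec)^2$ to $(P;\leq)$ if for every $s\geq1$, all $\alpha_1,\alpha_2\in{\rm Aut}(P;\leq,\prec)$ and all $d_1,d_2\in P^s$ there is $\beta\in{\rm Aut}(P;\leq)$ with $f(\alpha_1(d_1),\alpha_2(d_2))=\beta(f(d_1,d_2))$ (all maps applied componentwise). $f$ is dominated on the first argument if $f(x,y)<f(x',y')$ whenever $x<x'$ and $f(x,y)\bot f(x',y')$ whenever $x\bot x'$ (for all $y,y'$); $f$ is dominated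 if $f$ or $(x,y)\mapsto f(y,x)$ is dominated on the first argument. $e_<:P^2\to P$ is a fixed embedding of $(P;<)^2$ into $(P;<)$, i.e. an injective map with $e_<(a,b)<e_<(a',b')\iff(a<a'\wedge b<b')$; $e_\leq:P^2\to P$ is a fixed embedding of $(P;\leq)^2$ into $(P;\leq)$, i.e. injective with $e_\leq(a,b)\leq e_\leq(a',b')\iff(a\leq a'\wedge b\leq b')$. *)

(* Defs.v *)
From mathcomp Require Import all_boot.
Set Implicit Arguments. Unset Strict Implicit. Unset Printing Implicit Defensive.

Section Defs.
Variable P : Type.

Definition partial_order (le : P -> P -> Prop) :=
  (forall x, le x x) /\ (forall x y, le x y -> le y x -> x = y) /\
  (forall x y z, le x y -> le y z -> le x z).

Definition strict (le : P -> P -> Prop) x y := le x y /\ x <> y.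
Definition incomp (le : P -> P -> Prop) x y := ~ le x y /\ ~ le y x.

Definition countable := exists g : P -> nat, injective g.

Definition is_aut1 (le : P -> P -> Prop) (a : P -> P) :=
  bijective a /\ forall x y, le x y <-> le (a x) (a y).
Definition is_aut2 (le prec : P -> P -> Prop) (a : P -> P) :=
  bijective a /\ (forall x y, le x y <-> le (a x) (a y))
              /\ (forall x y, prec x y <-> prec (a x) (a y)).

(** (P;le) is the Fraisse limit of the class of finite partial orders:
    countable, homogeneous, and with age = all finite partial orders. *)
Definition random_poset (le : P -> P -> Prop) :=
  partial_order le /\ countable /\
  (forall (n : nat) (a b : 'I_n -> P), injective a -> injective b ->
     (forall i j, le (a i) (a j) <-> le (b i) (b j)) ->
     exists al, is_aut1 le al /\ forall i, al (a i) = b i) /\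
  (forall (n : nat) (r : 'I_n -> 'I_n -> Prop),
     (forall i, r i i) -> (forall i j, r i j -> r j i -> i = j) ->
     (forall i j k, r i j -> r j k -> r i k) ->
     exists a : 'I_n -> P, injective a /\ forall i j, r i j <-> le (a i) (a j)).

(** (P;le,prec) is the Fraisse limit of the class of finite structures (A;≤,≺)
    with ≤ a partial order and ≺ a (strict) linear order extending <. *)
Definition random_poset_linext (le prec : P -> P -> Prop) :=
  partial_order le /\
  (forall x, ~ prec x x) /\ (forall x y z, prec x y -> prec y z -> prec x z) /\
  (forall x y, x <> y -> prec x y \/ prec y x) /\
  (forall x y, strict le x y -> prec x y) /\
  countable /\
  (forall (n : nat) (a b : 'I_n -> P), injective a -> injective b ->
     (forall i j, le (a i) (a j) <-> le (b i) (b j)) ->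
     (forall i j, prec (a i) (a j) <-> prec (b i) (b j)) ->
     exists al, is_aut2 le prec al /\ forall i, al (a i) = b i) /\
  (forall (n : nat) (r q : 'I_n -> 'I_n -> Prop),
     (forall i, r i i) -> (forall i j, r i j -> r j i -> i = j) ->
     (forall i j k, r i j -> r j k -> r i k) ->
     (forall i, ~ q i i) -> (forall i j k, q i j -> q j k -> q i k) ->
     (forall i j, i <> j -> q i j \/ q j i) ->
     (forall i j, r i j -> i <> j -> q i j) ->
     exists a : 'I_n -> P, injective a /\
       (forall i j, r i j <-> le (a i) (a j)) /\ (forall i j, q i j <-> prec (a i) (a j))).

Inductive fo : Type :=
| FLe : nat -> nat -> fo
| FEq : nat -> nat -> fo
| FNot : fo -> fo
| FAnd : fo -> fo -> fo
| FEx : nat -> fo -> fo.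

Definition upd (env : nat -> P) (i : nat) (x : P) : nat -> P :=
  fun j => if j == i then x else env j.

Fixpoint sat (le : P -> P -> Prop) (env : nat -> P) (phi : fo) : Prop :=
  match phi with
  | FLe i j => le (env i) (env j)
  | FEq i j => env i = env j
  | FNot p => ~ sat le env p
  | FAnd p q => sat le env p /\ sat le env q
  | FEx i p => exists x, sat le (upd env i x) p
  end.

Definition fo_definable (le : P -> P -> Prop) (k : nat) (S : ('I_k -> P) -> Prop) :=
  exists phi : fo, forall env : nat -> P,
    S (fun j : 'I_k => env (nat_of_ord j)) <-> sat le env phi.

(** A structure Gamma on P: relations R i of arity ar i, i ranging over I. *)
Section Gamma.
Variables (I : Type) (ar : I -> nat) (R : forall i : I, ('I_(ar i) -> P) -> Prop).

Inductive ppatom : Type :=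
| PEq : nat -> nat -> ppatom
| PRel : forall i : I, ('I_(ar i) -> nat) -> ppatom.

Definition ppholds (env : nat -> P) (a : ppatom) : Prop :=
  match a with
  | PEq x y => env x = env y
  | PRel i v => R (fun l => env (v l))
  end.

Definition pp_definable (k : nat) (S : ('I_k -> P) -> Prop) :=
  exists (m : nat) (atoms : 'I_m -> ppatom), forall t : 'I_k -> P,
    S t <-> exists env : nat -> P,
      (forall j : 'I_k, env (nat_of_ord j) = t j) /\ forall a, ppholds env (atoms a).

Definition pol2 (f : P -> P -> P) :=
  forall (i : I) (t1 t2 : 'I_(ar i) -> P), R t1 -> R t2 -> R (fun l => f (t1 l) (t2 l)).
End Gamma.

Definition binrel (r : P -> P -> Prop) : ('I_2 -> P) -> Prop :=
  fun t => r (t ord0) (t (@ord_max 1)).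

Definition canonical2 (le prec : P -> P -> Prop) (f : P -> P -> P) :=
  forall (s : nat), 0 < s -> forall (a1 a2 : P -> P), is_aut2 le prec a1 -> is_aut2 le prec a2 ->
  forall d1 d2 : 'I_s -> P, exists b, is_aut1 le b /\
    forall l : 'I_s, f (a1 (d1 l)) (a2 (d2 l)) = b (f (d1 l) (d2 l)).

Definition dominated_first (le : P -> P -> Prop) (f : P -> P -> P) :=
  forall x y x' y',
    (strict le x x' -> strict le (f x y) (f x' y')) /\
    (incomp le x x' -> incomp le (f x y) (f x' y')).

Definition dominated (le : P -> P -> Prop) (f : P -> P -> P) :=
  dominated_first le f \/ dominated_first le (fun x y => f y x).

Definition emb_lt (le : P -> P -> Prop) (e : P -> P -> P) :=
  (forall a b a' b', e a b = e a' b' -> a = a' /\ b = b') /\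
  forall a b a' b', strict le (e a b) (e a' b') <-> (strict le a a' /\ strict le b b').
Definition emb_le (le : P -> P -> Prop) (e : P -> P -> P) :=
  (forall a b a' b', e a b = e a' b' -> a = a' /\ b = b') /\
  forall a b a' b', le (e a b) (e a' b') <-> (le a a' /\ le b b').

End Defs.

(* Main.v *)
From Stdlib Require Import Classical ClassicalEpsilon FunctionalExtensionality PropExtensionality.
From HB Require Import structures.
Require Import Defs.
From mathcomp Require Import all_boot.
Set Implicit Arguments. Unset Strict Implicit. Unset Printing Implicit Defensive.

Lemma compress (T : Type) n (z : 'I_n -> T) : exists m (w : 'I_m -> T) (s : 'I_n -> 'I_m),
  injective w /\ (forall i, z i = w (s i)) /\ (forall mu, exists i, s i = mu).
Proof.
elim: n z => [|n IH] z.
  exists 0, z, id; split; [by move=> [] | split=> // mu]; by exists mu.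
case: (classic (injective z)) => Hi.
  exists n.+1, z, id; split=> //; split=> // mu; by exists mu.
have [i [j [Hij Hne]]] : exists i j, z i = z j /\ i <> j.
  apply: NNPP => H; apply: Hi => i j Hz; apply: NNPP => Hn; apply: H; by exists i, j.
have [i' Hi'] : exists i', i = lift j i'.
  case: (unliftP j i) => [i' ->|Heq]; [by exists i'| by case: Hne].
have [m [w [s [Hw [Hz Hs]]]]] := IH (fun k => z (lift j k)).
exists m, w, (fun k => match unlift j k with Some k' => s k' | None => s i' end).
split=> //; split.
  move=> k; case: (unliftP j k) => [k' ->|->]; first exact: Hz.
  by rewrite -Hij Hi' Hz.
move=> mu; have [k Hk] := Hs mu; exists (lift j k); by rewrite liftK.
Qed.


Section Main.
Variables (P : Type) (le prec : P -> P -> Prop).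
Hypothesis HP : random_poset le.
Hypothesis HL : random_poset_linext le prec.

Lemma le_refl x : le x x. Proof. case: HP => [[H _] _]; exact: H. Qed.
Lemma le_anti x y : le x y -> le y x -> x = y. Proof. case: HP => [[_ [H _]] _]; exact: H. Qed.
Lemma le_trans x y z : le x y -> le y z -> le x z. Proof. case: HP => [[_ [_ H]] _]; exact: H. Qed.
Lemma prec_irr x : ~ prec x x. Proof. case: HL => [_ [H _]]; exact: H. Qed.
Lemma prec_trans x y z : prec x y -> prec y z -> prec x z.
Proof. case: HL => [_ [_ [H _]]]; exact: H. Qed.
Lemma prec_tot x y : x <> y -> prec x y \/ prec y x.
Proof. case: HL => [_ [_ [_ [H _]]]]; exact: H. Qed.
Lemma prec_ext x y : le x y -> x <> y -> prec x y.
Proof. case: HL => [_ [_ [_ [_ [H _]]]]] a b; apply: H; by split. Qed.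
Lemma prec_asym x y : prec x y -> ~ prec y x.
Proof. move=> a b; apply: (@prec_irr x); exact: prec_trans a b. Qed.

Lemma pair_compress n (a b : 'I_n -> P) :
  exists m (a' b' : 'I_m -> P) (s : 'I_n -> 'I_m),
   (forall mu nu, a' mu = a' nu \/ b' mu = b' nu -> (forall i j, s i = mu -> s j = nu -> (a i = a j <-> b i = b j)) -> mu = nu)
   /\ (forall i, a i = a' (s i) /\ b i = b' (s i)) /\ (forall mu, exists i, s i = mu).
Proof.
have [m [w [s [Hw [Hz Hs]]]]] := compress (fun i => (a i, b i)).
exists m, (fun mu => (w mu).1), (fun mu => (w mu).2), s; split; last first.
  split=> // i; by rewrite -(Hz i).
move=> mu nu Heq Hpat; apply: Hw.
have [i Hi] := Hs mu; have [j Hj] := Hs nu.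
have := Hpat i j Hi Hj; rewrite -Hi -Hj -!Hz /= => Hp.
move: Heq; rewrite -Hi -Hj -!Hz /=; case=> H.
  by rewrite H (proj1 Hp H).
by rewrite H (proj2 Hp H).
Qed.

Lemma homog1 n (a b : 'I_n -> P) :
  (forall i j, a i = a j <-> b i = b j) -> (forall i j, le (a i) (a j) <-> le (b i) (b j)) ->
  exists g, is_aut1 le g /\ forall i, g (a i) = b i.
Proof.
move=> He Hl.
have [m [a' [b' [s [Hinj [Hz Hs]]]]]] := pair_compress a b.
have Hinj' : forall mu nu, a' mu = a' nu \/ b' mu = b' nu -> mu = nu.
  move=> mu nu H; apply: Hinj H _ => i j _ _; exact: He.
case: HP => [_ [_ [Hh _]]].
have [g [Hg Hgi]] : exists g, is_aut1 le g /\ forall mu, g (a' mu) = b' mu.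
  apply: Hh.
  - by move=> mu nu H; apply: Hinj'; left.
  - by move=> mu nu H; apply: Hinj'; right.
  move=> mu nu; have [i <-] := Hs mu; have [j <-] := Hs nu.
  by rewrite -!(proj1 (Hz _)) -!(proj2 (Hz _)).
exists g; split=> // i; by rewrite (proj1 (Hz i)) Hgi -(proj2 (Hz i)).
Qed.

Lemma homog2 n (a b : 'I_n -> P) :
  (forall i j, a i = a j <-> b i = b j) -> (forall i j, le (a i) (a j) <-> le (b i) (b j)) ->
  (forall i j, prec (a i) (a j) <-> prec (b i) (b j)) ->
  exists g, is_aut2 le prec g /\ forall i, g (a i) = b i.
Proof.
move=> He Hl Hp.
have [m [a' [b' [s [Hinj [Hz Hs]]]]]] := pair_compress a b.
have Hinj' : forall mu nu, a' mu = a' nu \/ b' mu = b' nu -> mu = nu.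
  move=> mu nu H; apply: Hinj H _ => i j _ _; exact: He.
case: HL => [_ [_ [_ [_ [_ [_ [Hh _]]]]]]].
have [g [Hg Hgi]] : exists g, is_aut2 le prec g /\ forall mu, g (a' mu) = b' mu.
  apply: Hh.
  - by move=> mu nu H; apply: Hinj'; left.
  - by move=> mu nu H; apply: Hinj'; right.
  - move=> mu nu; have [i <-] := Hs mu; have [j <-] := Hs nu.
    by rewrite -!(proj1 (Hz _)) -!(proj2 (Hz _)).
  move=> mu nu; have [i <-] := Hs mu; have [j <-] := Hs nu.
  by rewrite -!(proj1 (Hz _)) -!(proj2 (Hz _)).
exists g; split=> // i; by rewrite (proj1 (Hz i)) Hgi -(proj2 (Hz i)).
Qed.

End Main.


Inductive ty := TE | TL | TG | TP | TM.
Inductive oty := OE | OL | OG | OI.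

Definition dec (Q : Prop) : bool := if excluded_middle_informative Q then true else false.
Lemma decT (Q : Prop) : Q -> dec Q = true.
Proof. by rewrite /dec; case: excluded_middle_informative. Qed.
Lemma decF (Q : Prop) : ~ Q -> dec Q = false.
Proof. by rewrite /dec; case: excluded_middle_informative. Qed.

Section Types.
Variables (P : Type) (le prec : P -> P -> Prop).
Hypothesis HP : random_poset le.
Hypothesis HL : random_poset_linext le prec.

Definition typ x y := if dec (x = y) then TE else if dec (le x y) then TL
  else if dec (le y x) then TG else if dec (prec x y) then TP else TM.
Definition otyp x y := if dec (x = y) then OE else if dec (le x y) then OL
  else if dec (le y x) then OG else OI.

Variant typ_spec x y : ty -> Prop :=
| TyE : x = y -> typ_spec x y TE
| TyL : x <> y -> le x y -> typ_spec x y TL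
| TyG : x <> y -> ~ le x y -> le y x -> typ_spec x y TG
| TyP : ~ le x y -> ~ le y x -> prec x y -> typ_spec x y TP
| TyM : ~ le x y -> ~ le y x -> ~ prec x y -> typ_spec x y TM.

Lemma typP x y : typ_spec x y (typ x y).
Proof.
rewrite /typ; case: (classic (x = y)) => h1; first by rewrite decT //; constructor.
rewrite decF //; case: (classic (le x y)) => h2; first by rewrite decT //; constructor.
rewrite decF //; case: (classic (le y x)) => h3; first by rewrite decT //; constructor.
rewrite decF //; case: (classic (prec x y)) => h4; first by rewrite decT //; constructor.
by rewrite decF //; constructor.
Qed.

Variant otyp_spec x y : oty -> Prop :=
| OyE : x = y -> otyp_spec x y OE
| OyL : x <> y -> le x y -> otyp_spec x y OL
| OyG : x <> y -> ~ le x y -> le y x -> otyp_spec x y OG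
| OyI : ~ le x y -> ~ le y x -> otyp_spec x y OI.

Lemma otypP x y : otyp_spec x y (otyp x y).
Proof.
rewrite /otyp; case: (classic (x = y)) => h1; first by rewrite decT //; constructor.
rewrite decF //; case: (classic (le x y)) => h2; first by rewrite decT //; constructor.
rewrite decF //; case: (classic (le y x)) => h3; first by rewrite decT //; constructor.
by rewrite decF //; constructor.
Qed.

Ltac lfalse HP := solve [exfalso; match goal with H : ~ le ?a ?a |- _ => exact: (H (le_refl HP a)) end].

Lemma typ_eq x y : x = y <-> typ x y = TE.
Proof.
case: typP => [h|h _|h _ _|h1 h2 _|h1 h2 _]; split => // e; subst => //; lfalse HP.
Qed.

Lemma typ_le x y : le x y <-> (typ x y = TE \/ typ x y = TL).
Proof.
case: typP => [->|h1 h2|h1 h2 h3|h1 h2 _|h1 h2 _]; split => //; try by [left|right];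
  try (by move=> _; apply: le_refl); by case.
Qed.

Lemma typ_ge x y : le y x <-> (typ x y = TE \/ typ x y = TG).
Proof.
case: typP => [->|h1 h2|h1 h2 h3|h1 h2 _|h1 h2 _]; split => //; try by [left|right];
  try (by move=> _; apply: le_refl); try by case.
all: try by move=> h3; case: h1; exact: (le_anti HP h2 h3).
all: by move=> /h2.
Qed.

Lemma typ_prec x y : prec x y <-> (typ x y = TL \/ typ x y = TP).
Proof.
case: typP => [->|h1 h2|h1 h2 h3|h1 h2 h3|h1 h2 h3]; split => //; try by [left|right]; try by case.
- move=> h; by case: (prec_irr HL h).
- move=> _; exact (prec_ext HL h2 h1).
- move=> h; exfalso; apply: (prec_asym HL h); apply: (prec_ext HL h3) => e; by case: h1.
Qed.

Lemma typ_sprec x y : prec y x <-> (typ x y = TG \/ typ x y = TM).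
Proof.
case: typP => [->|h1 h2|h1 h2 h3|h1 h2 h3|h1 h2 h3]; split => //; try by [left|right]; try by case.
- move=> h; by case: (prec_irr HL h).
- move=> h; exfalso; apply: (prec_asym HL h); exact (prec_ext HL h2 h1).
- move=> _; apply: (prec_ext HL h3) => e; by case: h1.
- move=> h; by case: (prec_asym HL h3 h).
- move=> _; case: (prec_tot HL (x:=x) (y:=y)) => // e; subst; lfalse HP.
Qed.

Lemma typ_same x x' u u' : typ x x' = typ u u' ->
  [/\ x = x' <-> u = u', le x x' <-> le u u', le x' x <-> le u' u,
      prec x x' <-> prec u u' & prec x' x <-> prec u' u].
Proof.
move=> H; split.
- by rewrite (typ_eq x x') (typ_eq u u') H.
- by rewrite (typ_le x x') (typ_le u u') H.
- by rewrite (typ_ge x x') (typ_ge u u') H.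
- by rewrite (typ_prec x x') (typ_prec u u') H.
- by rewrite (typ_sprec x x') (typ_sprec u u') H.
Qed.

End Types.


Definition trev t := match t with TE => TE | TL => TG | TG => TL | TP => TM | TM => TP end.
Definition orev o := match o with OE => OE | OL => OG | OG => OL | OI => OI end.

Definition tup2 (T : Type) (x y : T) : 'I_2 -> T := fun i => if nat_of_ord i == 0 then x else y.

Lemma forall_I2 (Q : 'I_2 -> Prop) : Q ord0 -> Q ord_max -> forall i, Q i.
Proof.
move=> H0 H1 [[|[|//]] Hi].
- by have -> : Ordinal Hi = ord0 by apply: val_inj.
- by have -> : Ordinal Hi = ord_max by apply: val_inj.
Qed.

Section Tab.
Variables (P : Type) (le prec : P -> P -> Prop).
Hypothesis HP : random_poset le.
Hypothesis HL : random_poset_linext le prec.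

Lemma otyp_ext a b c d : (a = b <-> c = d) -> (le a b <-> le c d) -> (le b a <-> le d c) ->
  otyp le a b = otyp le c d.
Proof.
move=> h1 h2 h3; rewrite /otyp (propositional_extensionality _ _ h1)
  (propositional_extensionality _ _ h2) (propositional_extensionality _ _ h3) //.
Qed.

Lemma otyp_aut g a b : is_aut1 le g -> otyp le (g a) (g b) = otyp le a b.
Proof.
move=> [Hb Hl]; have Hi := bij_inj Hb.
apply: otyp_ext; [split; [exact (@Hi a b) | by move=> ->] | exact (iff_sym (Hl a b)) | exact (iff_sym (Hl b a))].
Qed.

Lemma inhab : exists x : P, True.
Proof.
case: HP => [_ [_ [_ H]]].
have [a _] := H 1 (fun _ _ => True) (fun _ => I) (fun i j _ _ => etrans (ord1 i) (esym (ord1 j))) (fun _ _ _ _ _ => I).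
by exists (a ord0).
Qed.

Lemma emb2 (c : bool) : exists x y, x <> y /\ (le x y <-> c) /\ ~ le y x /\ prec x y.
Proof.
case: HL => [_ [_ [_ [_ [_ [_ [_ H]]]]]]].
pose r := fun i j : 'I_2 => is_true ((i == j) || (c && (i < j)%N)).
pose q := fun i j : 'I_2 => is_true (i < j)%N.
have h1 : forall i, r i i by move=> i; rewrite /r eqxx.
have h2 : forall i j, r i j -> r j i -> i = j.
  rewrite /r => i j /orP [/eqP //|/andP [_ h1']] /orP [/eqP //|/andP [_ h2']].
  by move: (ltn_trans h1' h2'); rewrite ltnn.
have h3 : forall i j k, r i j -> r j k -> r i k.
  rewrite /r => i j k /orP [/eqP ->//|/andP [hc h1']] /orP [/eqP <-|/andP [_ h2']]; first by rewrite hc h1' orbT.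
  by rewrite hc (ltn_trans h1' h2') orbT.
have h4 : forall i, ~ q i i by move=> i; rewrite /q ltnn.
have h5 : forall i j k, q i j -> q j k -> q i k by rewrite /q => i j k; exact: ltn_trans.
have h6 : forall i j, i <> j -> q i j \/ q j i.
  rewrite /q => i j hij; case: (ltngtP i j) => h; [by left|by right|].
  by case: hij; apply: val_inj.
have h7 : forall i j, r i j -> i <> j -> q i j.
  rewrite /r /q => i j /orP [/eqP -> //|/andP [_ h]] _ //.
have [a [Ha [Hr Hq]]] := H 2 r q h1 h2 h3 h4 h5 h6 h7.
exists (a ord0), (a ord_max); split; first by move=> /Ha.
split; first by rewrite -Hr /r /= andbT.
split; first by rewrite -Hr /r /= andbF.
by rewrite -Hq.
Qed.

Lemma ex_typ t : exists p : P * P, typ le prec p.1 p.2 = t.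
Proof.
have TE' : exists p : P * P, typ le prec p.1 p.2 = TE.
  have [x _] := inhab; exists (x, x); exact (proj1 (typ_eq prec HP x x) erefl).
have [x [y [h1 [h2 [h3 h4]]]]] := emb2 true.
have [x' [y' [h1' [h2' [h3' h4']]]]] := emb2 false.
have h2t : le x y by apply/h2.
have h2f : ~ le x' y' by move/h2'.
case: t => //.
- exists (x, y) => /=; case: typP => //; move=> *; exfalso; eauto.
- exists (y, x) => /=; case: typP => //; move=> *; exfalso; eauto.
- exists (x', y') => /=; case: typP => //; move=> *; exfalso; eauto.
- exists (y', x') => /=; case: typP => //; move=> *; exfalso; eauto.
  exact: (prec_asym HL h4').
Qed.

Definition rep t : P * P := proj1_sig (constructive_indefinite_description _ (ex_typ t)).
Lemma repP t : typ le prec (rep t).1 (rep t).2 = t.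
Proof. rewrite /rep; by case: constructive_indefinite_description. Qed.

Definition out (f : P -> P -> P) a b :=
  otyp le (f (rep a).1 (rep b).1) (f (rep a).2 (rep b).2).

Lemma canon_typ f : canonical2 le prec f -> forall x x' y y' u u' v v',
  typ le prec x x' = typ le prec u u' -> typ le prec y y' = typ le prec v v' ->
  otyp le (f x y) (f x' y') = otyp le (f u v) (f u' v').
Proof.
move=> Hc x x' y y' u u' v v' H1 H2.
have mk : forall a a' b b', typ le prec a a' = typ le prec b b' ->
    exists g, is_aut2 le prec g /\ g a = b /\ g a' = b'.
  move=> a a' b b' H.
  case: (typ_same HP HL H) => e1 e2 e3 e4 e5.
  have He : forall i j, tup2 a a' i = tup2 a a' j <-> tup2 b b' i = tup2 b b' j.
    apply: forall_I2; apply: forall_I2; rewrite /tup2 /= //.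
    by split => h; apply/esym; apply/e1; apply/esym.
  have Hl : forall i j, le (tup2 a a' i) (tup2 a a' j) <-> le (tup2 b b' i) (tup2 b b' j).
    apply: forall_I2; apply: forall_I2; rewrite /tup2 /= //;
    by split => _; apply: (le_refl HP).
  have Hp : forall i j, prec (tup2 a a' i) (tup2 a a' j) <-> prec (tup2 b b' i) (tup2 b b' j).
    apply: forall_I2; apply: forall_I2; rewrite /tup2 /= //;
    by split => /(prec_irr HL).
  have [g [Hg Hgi]] := homog2 HL He Hl Hp.
  exists g; split=> //; split; [exact: (Hgi ord0) | exact: (Hgi ord_max)].
have [a1 [Ha1 [ea1 ea1']]] := mk _ _ _ _ H1.
have [a2 [Ha2 [ea2 ea2']]] := mk _ _ _ _ H2.
have [b [Hb Hbl]] := Hc 2 erefl a1 a2 Ha1 Ha2 (tup2 x x') (tup2 y y').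
have h0 := Hbl ord0; have h1 := Hbl ord_max; rewrite /tup2 /= ea1 ea1' ea2 ea2' in h0 h1.
by rewrite h0 h1 otyp_aut.
Qed.

Lemma outP f : canonical2 le prec f -> forall x x' y y',
  otyp le (f x y) (f x' y') = out f (typ le prec x x') (typ le prec y y').
Proof.
move=> Hc x x' y y'; apply: canon_typ => //; by rewrite repP.
Qed.

End Tab.


Section Pol.
Variables (P : Type) (le prec : P -> P -> Prop).
Hypothesis HP : random_poset le.
Hypothesis HL : random_poset_linext le prec.

Lemma typ_rev x y : typ le prec y x = trev (typ le prec x y).
Proof.
case: (typP le prec x y) => [->|h1 h2|h1 h2 h3|h1 h2 h3|h1 h2 h3] /=.
- by apply/(typ_eq prec HP).
- case: (typP le prec y x) => // *; exfalso; eauto using (le_anti HP).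
- case: (typP le prec y x) => // *; exfalso; eauto using (le_anti HP).
- have na := prec_asym HL h3.
  case: (typP le prec y x) => // *; exfalso; subst; eauto using (le_refl HP).
- have hne : x <> y by move=> e; subst; eauto using (le_refl HP).
  have ht := prec_tot HL hne.
  case: (typP le prec y x) => // *; exfalso; subst; try by eauto using (le_refl HP).
  case: ht; eauto.
Qed.

Lemma otyp_rev x y : otyp le y x = orev (otyp le x y).
Proof.
case: (otypP le x y) => [->|h1 h2|h1 h2 h3|h1 h2] /=.
- by rewrite /otyp decT.
- case: (otypP le y x) => // *; exfalso; subst; eauto using (le_anti HP), (le_refl HP).
- case: (otypP le y x) => // *; exfalso; subst; eauto using (le_anti HP), (le_refl HP).
- case: (otypP le y x) => // *; exfalso; subst; eauto using (le_anti HP), (le_refl HP).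
Qed.

Lemma otyp_strict x y : strict le x y -> otyp le x y = OL.
Proof. case=> h1 h2; case: (otypP le x y) => // *; exfalso; eauto. Qed.
Lemma otyp_incomp x y : incomp le x y -> otyp le x y = OI.
Proof. case=> h1 h2; case: (otypP le x y) => // *; exfalso; subst; eauto using (le_refl HP). Qed.
Lemma otyp_eq x y : x = y -> otyp le x y = OE.
Proof. by move->; rewrite /otyp decT. Qed.

Lemma otyp_strictE x y : otyp le x y = OL <-> strict le x y.
Proof. split; last exact: otyp_strict. case: (otypP le x y) => // h1 h2 _; by split. Qed.
Lemma otyp_eqE x y : otyp le x y = OE <-> x = y.
Proof. split; last exact: otyp_eq. by case: (otypP le x y). Qed.

Unset Implicit Arguments.
Variables (I : Type) (ar : I -> nat) (R : forall i, ('I_(ar i) -> P) -> Prop).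
Set Implicit Arguments.
Hypothesis HR : forall i, fo_definable le (R i).

Lemma sat_aut g : is_aut1 le g -> forall phi env, sat le env phi <-> sat le (fun n => g (env n)) phi.
Proof.
move=> [Hb Hl]; have Hi := bij_inj Hb; case: Hb => h gh hg.
have Eu : forall env i x, (fun n => g (upd env i x n)) = upd (fun n => g (env n)) i (g x).
  move=> env i x; apply: functional_extensionality => n; rewrite /upd; by case: (n == i).
elim=> [i j|i j|p IH|p IHp q IHq|i p IH] env /=.
- exact: Hl.
- split=> [->//|]; exact: Hi.
- split=> H1 H2; apply: H1; [exact (proj2 (IH env) H2) | exact (proj1 (IH env) H2)].
- split=> [[h1 h2]|[h1 h2]]; split.
  + exact (proj1 (IHp env) h1).
  + exact (proj1 (IHq env) h2).
  + exact (proj2 (IHp env) h1).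
  + exact (proj2 (IHq env) h2).
- split=> [[x Hx]|[x Hx]].
  + exists (g x); rewrite -Eu; exact (proj1 (IH _) Hx).
  + exists (h x); apply/(IH _); by rewrite Eu hg.
Qed.

Lemma R_aut g : is_aut1 le g -> forall i t, R i t -> R i (fun l => g (t l)).
Proof.
move=> Hg i t Ht; have [phi Hphi] := HR i; have [x0 _] := inhab HP.
pose env := fun n => oapp t x0 (insub n : option 'I_(ar i)).
have Et : (fun j : 'I_(ar i) => env j) = t.
  by apply: functional_extensionality => j; rewrite /env valK.
have E2 : (fun j : 'I_(ar i) => g (env j)) = (fun l => g (t l)).
  by apply: functional_extensionality => j; rewrite /env valK.
have Hs : sat le env phi by apply/Hphi; rewrite Et.
have Hs' := proj1 (sat_aut Hg phi env) Hs.
have := proj2 (Hphi (fun n => g (env n))) Hs'. by rewrite E2.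
Qed.

Lemma pol_comp f g1 g2 : pol2 R f -> pol2 R g1 -> pol2 R g2 ->
  pol2 R (fun x y => f (g1 x y) (g2 x y)).
Proof. move=> Hf H1 H2 i t1 t2 h1 h2; exact: (Hf i _ _ (H1 i _ _ h1 h2) (H2 i _ _ h1 h2)). Qed.
Lemma pol_pr1 g : is_aut1 le g -> pol2 R (fun x y => g x).
Proof. move=> Hg i t1 t2 h1 _; exact: R_aut. Qed.
Lemma pol_pr2 g : is_aut1 le g -> pol2 R (fun x y => g y).
Proof. move=> Hg i t1 t2 _ h2; exact: R_aut. Qed.
Lemma pol_swap g : pol2 R g -> pol2 R (fun x y => g y x).
Proof. move=> Hg i t1 t2 h1 h2; exact: Hg. Qed.
Lemma aut_id : is_aut1 le id.
Proof. split; first by exists id. done. Qed.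

Lemma pp_pres k (S : ('I_k -> P) -> Prop) f : pp_definable R S -> pol2 R f ->
  forall t1 t2, S t1 -> S t2 -> S (fun l => f (t1 l) (t2 l)).
Proof.
move=> [m [atoms H]] Hf t1 t2 /H [e1 [E1 A1]] /H [e2 [E2 A2]]; apply/H.
exists (fun n => f (e1 n) (e2 n)); split; first by move=> j; rewrite E1 E2.
move=> a; have := A1 a; have := A2 a; case: (atoms a) => [x y|i v] /=.
- by move=> -> ->.
- move=> h2 h1; exact: (Hf i _ _ h1 h2).
Qed.

Section F.
Variable f : P -> P -> P.
Hypothesis Hcan : canonical2 le prec f.
Hypothesis Hpol : pol2 R f.
Hypothesis Hlt : pp_definable R (binrel (strict le)).
Hypothesis Hinc : pp_definable R (binrel (incomp le)).

Lemma f_strict x x' y y' : strict le x x' -> strict le y y' -> strict le (f x y) (f x' y').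
Proof. move=> h1 h2; exact: (@pp_pres 2 _ f Hlt Hpol (tup2 x x') (tup2 y y') h1 h2). Qed.
Lemma f_incomp x x' y y' : incomp le x x' -> incomp le y y' -> incomp le (f x y) (f x' y').
Proof. move=> h1 h2; exact: (@pp_pres 2 _ f Hinc Hpol (tup2 x x') (tup2 y y') h1 h2). Qed.

Lemma out_rev a b : out HP HL f (trev a) (trev b) = orev (out HP HL f a b).
Proof.
have ha := repP HP HL a; have hb := repP HP HL b.
rewrite {2}/out -otyp_rev (outP HP HL Hcan).
move: ha hb; set x := (rep HP HL a).1; set x' := (rep HP HL a).2.
set y := (rep HP HL b).1; set y' := (rep HP HL b).2 => ha hb.
by rewrite (typ_rev x x') (typ_rev y y') ha hb.
Qed.

Lemma rep_strict t : t = TL -> strict le (rep HP HL t).1 (rep HP HL t).2.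
Proof. move=> ht; have := repP HP HL t; rewrite ht; case: typP => // h1 h2 _; by split => // e; apply: h1. Qed.
End F.
End Pol.


Definition oty_eqb a b := match a, b with OE,OE|OL,OL|OG,OG|OI,OI => true | _,_ => false end.
Lemma oty_eqP : Equality.axiom oty_eqb.
Proof. by move=> [] []; constructor. Qed.
HB.instance Definition _ := hasDecEq.Build oty oty_eqP.
Definition ty_eqb a b := match a, b with TE,TE|TL,TL|TG,TG|TP,TP|TM,TM => true | _,_ => false end.
Lemma ty_eqP : Equality.axiom ty_eqb.
Proof. by move=> [] []; constructor. Qed.
HB.instance Definition _ := hasDecEq.Build ty ty_eqP.

Definition ole o := match o with OE | OL => true | _ => false end.
Definition styp (rs : seq (nat * nat)) (i j : nat) : ty :=
  if i == j then TE else if (i, j) \in rs then TL else if (j, i) \in rs then TG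
  else if i < j then TP else TM.
Definition i3 := iota 0 3.
Definition cons3 (o : nat -> nat -> oty) : bool :=
  all (fun i => all (fun j => all (fun k =>
    (~~ (ole (o i j) && ole (o j k)) || ole (o i k)) && ((o i j != OE) || (o j k == o i k))) i3) i3) i3.
Record cfg := mkcfg { rs1 : seq (nat * nat); m1 : seq nat; rs2 : seq (nat * nat); m2 : seq nat }.
Definition cfg_ok (tab : ty -> ty -> oty) c :=
  cons3 (fun i j => tab (styp (rs1 c) (nth 0 (m1 c) i) (nth 0 (m1 c) j))
                        (styp (rs2 c) (nth 0 (m2 c) i) (nth 0 (m2 c) j))).
Definition valid3 (rs : seq (nat * nat)) :=
  all (fun i => all (fun j => all (fun k =>
    ((i, i) \notin rs) && (((i, j) \notin rs) || (i < j)) &&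
    (~~ (((i, j) \in rs) && ((j, k) \in rs)) || ((i, k) \in rs))) i3) i3) i3 &&
  all (fun p => (p.1 < 3) && (p.2 < 3)) rs.
Definition validm (m : seq nat) := all (fun x => x < 3) m.
Definition validc c := valid3 (rs1 c) && validm (m1 c) && valid3 (rs2 c) && validm (m2 c).

Definition cfgs := [::
  mkcfg [:: (0,2)] [:: 0; 1; 2] [:: (0,1); (0,2); (1,2)] [:: 2; 1; 0];
  mkcfg [:: (0,1); (0,2); (1,2)] [:: 0; 0; 1] [:: (0,1); (0,2); (1,2)] [:: 0; 1; 0];
  mkcfg [:: (0,1); (0,2); (1,2)] [:: 0; 0; 0] [:: (0,2)] [:: 0; 1; 2];
  mkcfg [:: (0,2)] [:: 0; 1; 2] [:: (0,1); (0,2); (1,2)] [:: 0; 0; 0];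
  mkcfg [:: (0,2); (1,2)] [:: 0; 1; 2] [:: (0,2)] [:: 0; 2; 1];
  mkcfg [:: (0,2); (1,2)] [:: 0; 1; 2] [:: (0,2); (1,2)] [:: 1; 2; 0];
  mkcfg [:: (0,1); (0,2); (1,2)] [:: 0; 0; 1] [:: (0,2); (1,2)] [:: 0; 1; 1];
  mkcfg [:: (0,1); (0,2); (1,2)] [:: 0; 0; 1] [:: (0,1); (0,2)] [:: 0; 1; 2];
  mkcfg [:: (1,2)] [:: 0; 1; 2] [:: (0,1)] [:: 0; 1; 2];
  mkcfg [:: (1,2)] [:: 0; 1; 2] [:: (0,1); (0,2); (1,2)] [:: 0; 0; 1];
  mkcfg [:: (0,1); (0,2); (1,2)] [:: 0; 1; 2] [:: (1,2)] [:: 1; 0; 2];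
  mkcfg [:: (0,2); (1,2)] [:: 0; 1; 2] [:: (0,1); (0,2); (1,2)] [:: 0; 2; 1];
  mkcfg [:: (1,2)] [:: 0; 1; 2] [:: (0,1); (0,2); (1,2)] [:: 1; 0; 1];
  mkcfg [:: (0,1); (0,2); (1,2)] [:: 0; 0; 1] [:: (0,1); (0,2); (1,2)] [:: 0; 1; 1];
  mkcfg [:: (0,1); (0,2); (1,2)] [:: 0; 1; 2] [:: (0,2)] [:: 2; 1; 0];
  mkcfg [:: (0,1); (0,2); (1,2)] [:: 0; 1; 2] [:: (0,2); (1,2)] [:: 1; 2; 0];
  mkcfg [:: (0,2)] [:: 0; 1; 2] [:: (0,1); (0,2); (1,2)] [:: 1; 2; 0];
  mkcfg [:: (0,2); (1,2)] [:: 0; 0; 1] [:: (1,2)] [:: 0; 1; 2];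
  mkcfg [:: (0,1); (0,2); (1,2)] [:: 0; 1; 2] [:: (0,2)] [:: 0; 2; 1];
  mkcfg [:: (0,2); (1,2)] [:: 0; 0; 1] [:: (0,1); (0,2); (1,2)] [:: 0; 2; 1];
  mkcfg [:: (0,1); (0,2); (1,2)] [:: 0; 1; 2] [:: (0,2); (1,2)] [:: 0; 1; 0]].

Lemma cfgs_valid : all validc cfgs. Proof. by vm_compute. Qed.

Definition mktab (v : seq oty) (a b : ty) : oty :=
  let w n := nth OE v n in
  match a, b with
  | TE,TE => OE | TL,TL => OL | TG,TG => OG | TP,TP => OI | TP,TM => OI | TM,TP => OI | TM,TM => OI
  | TE,TL => w 0 | TE,TG => orev (w 0) | TE,TP => w 1 | TE,TM => orev (w 1)
  | TL,TE => w 2 | TG,TE => orev (w 2) | TL,TG => w 3 | TG,TL => orev (w 3)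
  | TL,TP => w 4 | TG,TM => orev (w 4) | TL,TM => w 5 | TG,TP => orev (w 5)
  | TP,TE => w 6 | TM,TE => orev (w 6) | TP,TL => w 7 | TM,TG => orev (w 7)
  | TP,TG => w 8 | TM,TL => orev (w 8)
  end.
Definition allty := [:: TE; TL; TG; TP; TM].
Definition allo := [:: OE; OL; OG; OI].
Definition dom1 (tab : ty -> ty -> oty) :=
  all (fun b => tab TL b == OL) allty && all (fun b => tab TP b == OI) allty.
Definition swaptab (tab : ty -> ty -> oty) a b := tab b a.
Definition loi o := (o == OL) || (o == OI).
Definition sa (tab : ty -> ty -> oty) :=
  [&& tab TL TL == OL, tab TL TG == OI, tab TL TM == OI, all (fun b => tab TP b == OI) allty,
      loi (tab TL TE), loi (tab TL TP), loi (tab TE TL) & loi (tab TE TP)].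
Definition good tab := [|| dom1 tab, dom1 (swaptab tab), sa tab | sa (swaptab tab)].

Fixpoint lall (T : Type) (p : T -> bool) (s : seq T) : bool :=
  match s with [::] => true | x :: s' => if p x then lall p s' else false end.
Definition c3 (a b c : oty) :=
  if (if ole a then ole b else false) then (if ole c then (if a == OE then b == c else true) else false)
  else (if a == OE then b == c else true).
Definition cons6 (o01 o02 o10 o12 o20 o21 : oty) :=
  if c3 o01 o12 o02 then if c3 o02 o21 o01 then if c3 o10 o02 o12 then
  if c3 o12 o20 o10 then if c3 o20 o01 o21 then c3 o21 o10 o20 else false else false else false
  else false else false.
Definition check6 (tab : ty -> ty -> oty) (c6 : seq (ty * ty)) :=
  match c6 with
  | [:: p01; p02; p10; p12; p20; p21] =>
      cons6 (tab p01.1 p01.2) (tab p02.1 p02.2) (tab p10.1 p10.2) (tab p12.1 p12.2)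
            (tab p20.1 p20.2) (tab p21.1 p21.2)
  | _ => true end.
Definition cfgT := [::
  [:: (TP,TG); (TL,TG); (TM,TL); (TP,TG); (TG,TL); (TM,TL)];
  [:: (TE,TL); (TL,TE); (TE,TG); (TL,TG); (TG,TE); (TG,TL)];
  [:: (TE,TP); (TE,TL); (TE,TM); (TE,TP); (TE,TG); (TE,TM)];
  [:: (TP,TE); (TL,TE); (TM,TE); (TP,TE); (TG,TE); (TM,TE)];
  [:: (TP,TL); (TL,TP); (TM,TG); (TL,TM); (TG,TM); (TG,TP)];
  [:: (TP,TL); (TL,TM); (TM,TG); (TL,TG); (TG,TP); (TG,TL)];
  [:: (TE,TP); (TL,TP); (TE,TM); (TL,TE); (TG,TM); (TG,TE)];
  [:: (TE,TL); (TL,TL); (TE,TG); (TL,TP); (TG,TG); (TG,TM)];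
  [:: (TP,TL); (TP,TP); (TM,TG); (TL,TP); (TM,TM); (TG,TM)];
  [:: (TP,TE); (TP,TL); (TM,TE); (TL,TL); (TM,TG); (TG,TG)];
  [:: (TL,TM); (TL,TL); (TG,TP); (TL,TP); (TG,TG); (TG,TM)];
  [:: (TP,TL); (TL,TL); (TM,TG); (TL,TG); (TG,TG); (TG,TL)];
  [:: (TP,TG); (TP,TE); (TM,TL); (TL,TL); (TM,TE); (TG,TG)];
  [:: (TE,TL); (TL,TL); (TE,TG); (TL,TE); (TG,TG); (TG,TE)];
  [:: (TL,TM); (TL,TG); (TG,TP); (TL,TM); (TG,TL); (TG,TP)];
  [:: (TL,TL); (TL,TM); (TG,TG); (TL,TG); (TG,TP); (TG,TL)];
  [:: (TP,TL); (TL,TG); (TM,TG); (TP,TG); (TG,TL); (TM,TL)];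
  [:: (TE,TP); (TP,TP); (TE,TM); (TP,TL); (TM,TM); (TM,TG)];
  [:: (TL,TL); (TL,TP); (TG,TG); (TL,TM); (TG,TM); (TG,TP)];
  [:: (TE,TL); (TP,TL); (TE,TG); (TP,TG); (TM,TG); (TM,TL)];
  [:: (TL,TP); (TL,TE); (TG,TM); (TL,TM); (TG,TE); (TG,TP)]].
Definition pairs6 := [:: (0,1); (0,2); (1,0); (1,2); (2,0); (2,1)].
Definition cfg_types c : seq (ty * ty) :=
  [seq (styp (rs1 c) (nth 0 (m1 c) p.1) (nth 0 (m1 c) p.2), styp (rs2 c) (nth 0 (m2 c) p.1) (nth 0 (m2 c) p.2)) | p <- pairs6].
Lemma cfgT_eq : map cfg_types cfgs = cfgT. Proof. by vm_compute. Qed.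

Definition lall9 (p : seq oty -> bool) :=
  lall (fun a0 => lall (fun a1 => lall (fun a2 => lall (fun a3 => lall (fun a4 =>
  lall (fun a5 => lall (fun a6 => lall (fun a7 => lall (fun a8 =>
    p [:: a0; a1; a2; a3; a4; a5; a6; a7; a8]) allo) allo) allo) allo) allo) allo) allo) allo) allo.
Definition good' tab := if dom1 tab then true else if dom1 (swaptab tab) then true else
  if sa tab then true else sa (swaptab tab).
Lemma classify : lall9 (fun v => if lall (check6 (mktab v)) cfgT then good' (mktab v) else true) = true.
Proof. Time vm_compute. reflexivity. Qed.

Lemma lallE (T : Type) (p : T -> bool) s : lall p s = all p s.
Proof. by elim: s => //= x s IH; rewrite IH; case: (p x). Qed.

Lemma lall_allo (p : oty -> bool) : lall p allo = true -> forall a, p a = true.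
Proof. rewrite /= => H a; move: H; case: a; case: (p OE); case: (p OL); case: (p OG); case: (p OI) => //. Qed.

Lemma lall9P p : lall9 p = true -> forall a0 a1 a2 a3 a4 a5 a6 a7 a8,
  p [:: a0; a1; a2; a3; a4; a5; a6; a7; a8] = true.
Proof.
move=> H a0 a1 a2 a3 a4 a5 a6 a7 a8.
move: (lall_allo H a0) => {}H; move: (lall_allo H a1) => {}H; move: (lall_allo H a2) => {}H.
move: (lall_allo H a3) => {}H; move: (lall_allo H a4) => {}H; move: (lall_allo H a5) => {}H.
move: (lall_allo H a6) => {}H; move: (lall_allo H a7) => {}H; exact: (lall_allo H a8).
Qed.

Section Sound.
Variables (P : Type) (le prec : P -> P -> Prop).
Hypothesis HP : random_poset le.
Hypothesis HL : random_poset_linext le prec.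

Lemma ole_otyp a b : ole (otyp le a b) <-> le a b.
Proof.
case: (otypP le a b) => [->|h1 h2|h1 h2 h3|h1 h2] //=; split => //; try by move=> _; apply: le_refl.
all: by move=> /h1.
Qed.

Lemma c3_sound a b c : c3 (otyp le a b) (otyp le b c) (otyp le a c) = true.
Proof.
have E : (otyp le a b == OE) ==> (otyp le b c == otyp le a c).
  case: eqP => //= /(otyp_eqE le) ->; exact: eqxx.
have L : ole (otyp le a b) -> ole (otyp le b c) -> ole (otyp le a c).
  move=> /ole_otyp h1 /ole_otyp h2; exact (proj2 (ole_otyp a c) (le_trans HP h1 h2)).
rewrite /c3; move: E L; case: (ole (otyp le a b)); case: (ole (otyp le b c));
  case: (ole (otyp le a c)) => //=; by case: (otyp le a b == OE) => //= _; move=> /(_ erefl erefl).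
Qed.

Lemma cons6_sound z0 z1 z2 : cons6 (otyp le z0 z1) (otyp le z0 z2) (otyp le z1 z0)
  (otyp le z1 z2) (otyp le z2 z0) (otyp le z2 z1) = true.
Proof. by rewrite /cons6 !c3_sound. Qed.

Lemma realize3 rs : valid3 rs -> exists a : nat -> P, forall i j, i < 3 -> j < 3 ->
  typ le prec (a i) (a j) = styp rs i j.
Proof.
case/andP => /allP Hv /allP Hb.
have V : forall i j k, i < 3 -> j < 3 -> k < 3 -> [/\ (i, i) \notin rs, ((i, j) \notin rs) || (i < j) &
  (~~ (((i, j) \in rs) && ((j, k) \in rs)) || ((i, k) \in rs))].
  move=> i j k hi hj hk.
  have := Hv i; rewrite mem_iota add0n => /(_ hi) /allP /(_ j); rewrite mem_iota add0n => /(_ hj).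
  move=> /allP /(_ k); rewrite mem_iota add0n => /(_ hk) /andP [/andP [h1 h2] h3]; by split.
pose r := fun i j : 'I_3 => (i == j) || (((i : nat), (j : nat)) \in rs).
pose q := fun i j : 'I_3 => ((i : nat) < j).
case: HL => [_ [_ [_ [_ [_ [_ [_ H]]]]]]].
have h1 : forall i, r i i by move=> i; rewrite /r eqxx.
have h2 : forall i j, r i j -> r j i -> i = j.
  move=> i j; rewrite /r => /orP [/eqP //|a] /orP [/eqP //|b].
  have [_ ha _] := V i j i (ltn_ord i) (ltn_ord j) (ltn_ord i).
  have [_ hb _] := V j i j (ltn_ord j) (ltn_ord i) (ltn_ord j).
  rewrite a /= in ha; rewrite b /= in hb; by move: (ltn_trans ha hb); rewrite ltnn.
have h3 : forall i j k, r i j -> r j k -> r i k.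
  move=> i j k; rewrite /r => /orP [/eqP -> //|a] /orP [/eqP <-|b]; first by rewrite a orbT.
  have [_ _ hc] := V i j k (ltn_ord i) (ltn_ord j) (ltn_ord k).
  by rewrite a b /= in hc; rewrite hc orbT.
have h4 : forall i, ~ q i i by move=> i; rewrite /q ltnn.
have h5 : forall i j k, q i j -> q j k -> q i k by rewrite /q => i j k; exact: ltn_trans.
have h6 : forall i j, i <> j -> q i j \/ q j i.
  rewrite /q => i j hij; case: (ltngtP i j) => h; [by left|by right|].
  by case: hij; apply: val_inj.
have h7 : forall i j, r i j -> i <> j -> q i j.
  move=> i j; rewrite /r /q => /orP [/eqP -> //|a] _.
  have [_ ha _] := V i j i (ltn_ord i) (ltn_ord j) (ltn_ord i); by rewrite a in ha.
have [a [Ha [Hr Hq]]] := H 3 r q h1 h2 h3 h4 h5 h6 h7.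
exists (fun n => a (inord n)) => i j hi hj.
have ei : (inord i : 'I_3) = i :> nat by rewrite inordK.
have ej : (inord j : 'I_3) = j :> nat by rewrite inordK.
set I := (inord i : 'I_3); set J := (inord j : 'I_3).
have eIJ : (I == J) = (i == j) by apply/eqP/eqP => [e|e]; [by have := congr1 (@nat_of_ord 3) e; rewrite ei ej | apply: val_inj; rewrite /= ei ej].
have rIJ : r I J <-> le (a I) (a J) := Hr I J.
have rJI : r J I <-> le (a J) (a I) := Hr J I.
have qIJ : q I J <-> prec (a I) (a J) := Hq I J.
rewrite /r /q ei ej in rIJ rJI qIJ.
rewrite /styp; case: eqP => [e|ne].
  subst j; apply/(typ_eq prec HP); congr a; apply: val_inj; by rewrite ei ej.
have eF : (I == J) = false by rewrite eIJ; apply/eqP.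
have eF' : (J == I) = false by rewrite eq_sym eF.
rewrite eF /= in rIJ; rewrite eF' /= in rJI.
have nIJ : a I <> a J by move=> /Ha e; move: eF; rewrite e eqxx.
case: typP => [e|n l|n nl l|nl nl' p|nl nl' np].
- by case: nIJ.
- by rewrite (proj2 rIJ l).
- have h : ((i, j) \in rs) = false by apply/negP => /rIJ.
  by rewrite h (proj2 rJI l).
- have h : ((i, j) \in rs) = false by apply/negP => /rIJ.
  have h' : ((j, i) \in rs) = false by apply/negP => /rJI.
  by rewrite h h' (proj2 qIJ p).
- have h : ((i, j) \in rs) = false by apply/negP => /rIJ.
  have h' : ((j, i) \in rs) = false by apply/negP => /rJI.
  have h'' : (i < j) = false by apply/negP => /qIJ.
  by rewrite h h' h''.
Qed.

Lemma nth3 (m : seq nat) i : validm m -> nth 0 m i < 3.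
Proof.
move=> /allP Hm; case: (ltnP i (size m)) => h; first exact: (Hm _ (mem_nth 0 h)).
by rewrite nth_default.
Qed.

Lemma cfg_sound f : canonical2 le prec f -> forall c, validc c ->
  check6 (out HP HL f) (cfg_types c) = true.
Proof.
move=> Hc [r1 mm1 r2 mm2] /andP [/andP [/andP [v1 w1] v2] w2] /=.
have [a1 Ha1] := realize3 v1; have [a2 Ha2] := realize3 v2.
have E : forall i j, out HP HL f (styp r1 (nth 0 mm1 i) (nth 0 mm1 j)) (styp r2 (nth 0 mm2 i) (nth 0 mm2 j))
  = otyp le (f (a1 (nth 0 mm1 i)) (a2 (nth 0 mm2 i))) (f (a1 (nth 0 mm1 j)) (a2 (nth 0 mm2 j))).
  move=> i j; rewrite (outP HP HL Hc) !Ha1 ?Ha2 //; exact: nth3.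
rewrite /cfg_types /= !E; exact: cons6_sound.
Qed.

End Sound.


Section Gen.
Variables (P : Type) (le prec : P -> P -> Prop).
Hypothesis HP : random_poset le.
Hypothesis HL : random_poset_linext le prec.

Lemma flip k (z : 'I_k -> P) i j : incomp le (z i) (z j) ->
  exists b, is_aut1 le b /\ prec (b (z j)) (b (z i)).
Proof.
move=> [nij nji].
pose D x := le x (z j).
pose pr x y := (D x /\ ~ D y) \/ ((D x <-> D y) /\ prec x y).
have [m [w [s [Hw [Hz Hs]]]]] := compress z.
have [_ [_ [_ [_ [_ [_ [_ H]]]]]]] := HL.
pose r := fun a b : 'I_m => le (w a) (w b).
pose q := fun a b : 'I_m => pr (w a) (w b).
have h1 : forall a, r a a by move=> a; exact: (le_refl HP).
have h2 : forall a b, r a b -> r b a -> a = b by move=> a b x y; apply: Hw; exact: (le_anti HP x y).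
have h3 : forall a b c, r a b -> r b c -> r a c by move=> a b c x y; exact: (le_trans HP x y).
have h4 : forall a, ~ q a a.
  move=> a; rewrite /q /pr; case=> [[x y]|[_ x]]; [exact: y x| exact: (prec_irr HL x)].
have h5 : forall a b c, q a b -> q b c -> q a c.
  rewrite /q /pr => a b c.
  case: (classic (D (w a))) => da; case: (classic (D (w b))) => db; case: (classic (D (w c))) => dc;
  try tauto.
  + move=> [[_ //]|[_ x]] [[_ //]|[_ y]]; right; split; first tauto. exact: (prec_trans HL x y).
  + move=> [[_ //]|[_ x]] [[_ //]|[_ y]]; right; split; first tauto. exact: (prec_trans HL x y).
have h6 : forall a b, a <> b -> q a b \/ q b a.
  move=> a b nab; rewrite /q /pr.
  have nw : w a <> w b by move=> e; apply: nab; exact: Hw e.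
  case: (classic (D (w a))) => da; case: (classic (D (w b))) => db; try tauto.
  + case: (prec_tot HL nw) => x; [left|right]; right; split => //; tauto.
  + case: (prec_tot HL nw) => x; [left|right]; right; split => //; tauto.
have h7 : forall a b, r a b -> a <> b -> q a b.
  move=> a b hr nab; rewrite /q /pr.
  have nw : w a <> w b by move=> e; apply: nab; exact: Hw e.
  case: (classic (D (w a))) => da; case: (classic (D (w b))) => db.
  + right; split; first tauto. exact: (prec_ext HL hr nw).
  + by left.
  + exfalso; apply: da; exact: (le_trans HP hr db).
  + right; split; first tauto. exact: (prec_ext HL hr nw).
have [c [Hc [Hr Hq]]] := H m r q h1 h2 h3 h4 h5 h6 h7.
have [g [Hg Hgi]] := homog1 HP (a := w) (b := c)
  (fun a b => conj (fun e => f_equal c (Hw _ _ e)) (fun e => f_equal w (Hc _ _ e))) Hr.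
exists g; split => //.
rewrite !Hz !Hgi; apply/Hq; rewrite /q /pr -!Hz; left; split.
- exact: le_refl.
- exact: nij.
Qed.

Lemma le_iff a b : le a b <-> a = b \/ strict le a b.
Proof.
split.
- move=> h; case: (classic (a = b)) => e; [by left | by right].
- by case=> [->|[h _]]; [apply: le_refl|].
Qed.

Unset Implicit Arguments.
Variables (I : Type) (ar : I -> nat) (R : forall i, ('I_(ar i) -> P) -> Prop).
Set Implicit Arguments.
Hypothesis HR : forall i, fo_definable le (R i).

Lemma transfer e : (forall k (u v : 'I_k -> P), exists g, pol2 R g /\
   (forall l l', g (u l) (v l) = g (u l') (v l') <-> e (u l) (v l) = e (u l') (v l')) /\
   (forall l l', le (g (u l) (v l)) (g (u l') (v l')) <-> le (e (u l) (v l)) (e (u l') (v l')))) ->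
  pol2 R e.
Proof.
move=> H i t1 t2 h1 h2.
have [g [Hg [He Hl]]] := H _ t1 t2.
have Rg := Hg i t1 t2 h1 h2.
have [ga [Hga Hgae]] := homog1 HP (a := fun l => g (t1 l) (t2 l)) (b := fun l => e (t1 l) (t2 l)) He Hl.
have := R_aut HP HR Hga Rg.
have -> : (fun l => ga (g (t1 l) (t2 l))) = (fun l => e (t1 l) (t2 l)).
  apply: functional_extensionality => l; exact: Hgae.
done.
Qed.

Definition injp (g : P -> P -> P) k (u v : 'I_k -> P) :=
  forall l l', g (u l) (v l) = g (u l') (v l') -> u l = u l' /\ v l = v l'.

Lemma elt_from e : emb_lt le e ->
  (forall k (u v : 'I_k -> P), exists g, pol2 R g /\ injp g u v /\ forall l l',
     strict le (g (u l) (v l)) (g (u l') (v l')) <-> strict le (u l) (u l') /\ strict le (v l) (v l')) ->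
  pol2 R e.
Proof.
move=> [Ei Es] H; apply: transfer => k u v.
have [g [Hg [Hi Hs]]] := H k u v; exists g; split => //.
have Eq : forall l l', g (u l) (v l) = g (u l') (v l') <-> e (u l) (v l) = e (u l') (v l').
  move=> l l'; split => [/Hi [-> ->] //|/Ei [-> ->] //].
split => // l l'; rewrite !le_iff Eq Hs Es //.
Qed.

Lemma ele_from e : emb_le le e ->
  (forall k (u v : 'I_k -> P), exists g, pol2 R g /\ injp g u v /\ forall l l',
     strict le (g (u l) (v l)) (g (u l') (v l')) <->
       le (u l) (u l') /\ le (v l) (v l') /\ ~ (u l = u l' /\ v l = v l')) ->
  pol2 R e.
Proof.
move=> [Ei Es] H; apply: transfer => k u v.
have [g [Hg [Hi Hs]]] := H k u v; exists g; split => //.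
have Eq : forall l l', g (u l) (v l) = g (u l') (v l') <-> e (u l) (v l) = e (u l') (v l').
  move=> l l'; split => [/Hi [-> ->] //|/Ei [-> ->] //].
split => // l l'; rewrite Es le_iff Eq Hs; split.
- case=> [/Ei [-> ->]|[h1 [h2 _]]]; [split; exact: (le_refl HP) | by split].
- move=> [h1 h2]; case: (classic (u l = u l' /\ v l = v l')) => [[-> ->]|n]; [by left|right].
  by split.
Qed.
End Gen.


Lemma trevK t : trev (trev t) = t. Proof. by case: t. Qed.

Section SA.
Variables (P : Type) (le prec : P -> P -> Prop).
Hypothesis HP : random_poset le.
Hypothesis HL : random_poset_linext le prec.

Lemma typ_TE x y : typ le prec x y = TE <-> x = y.
Proof. by rewrite (typ_eq prec HP). Qed.
Lemma typ_TL x y : typ le prec x y = TL <-> strict le x y.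
Proof.
split; first by case: typP => // h1 h2 _; split.
case=> h1 h2; case: typP => //; move=> *; exfalso; subst; eauto using (le_refl HP), (le_anti HP).
Qed.
Lemma typ_TP x y : typ le prec x y = TP <-> incomp le x y /\ prec x y.
Proof.
split; first by case: typP => // h1 h2 h3 _; split.
case=> [[h1 h2] h3]; case: typP => //; move=> *; exfalso; subst; eauto using (le_refl HP), (le_anti HP).
Qed.

Lemma aut_eq b x y : is_aut1 le b -> (b x = b y <-> x = y).
Proof. move=> [Hb _]; split; [exact: (bij_inj Hb) | by move->]. Qed.
Lemma aut_strict b x y : is_aut1 le b -> (strict le (b x) (b y) <-> strict le x y).
Proof.
move=> Hb; have [_ Hl] := Hb; rewrite /strict -Hl.
by split => [] [h1 h2]; split => // e; apply: h2; [rewrite e | apply/(aut_eq _ _ Hb)].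
Qed.
Lemma aut_incomp b x y : is_aut1 le b -> (incomp le (b x) (b y) <-> incomp le x y).
Proof. move=> [_ Hl]; by rewrite /incomp -!Hl. Qed.

Unset Implicit Arguments.
Variables (I : Type) (ar : I -> nat) (R : forall i, ('I_(ar i) -> P) -> Prop).
Set Implicit Arguments.
Hypothesis HR : forall i, fo_definable le (R i).

Variable f : P -> P -> P.
Hypothesis Hcan : canonical2 le prec f.
Hypothesis Hpol : pol2 R f.
Hypothesis Hsa : sa (out HP HL f).
Local Notation o := (out HP HL f).

Lemma loiP x : loi x -> x = OL \/ x = OI.
Proof. by case: x => //= _; [left|right]. Qed.

Lemma of_sa : [/\ o TL TL = OL, o TL TG = OI, o TL TM = OI, (forall b, o TP b = OI) &
  [/\ loi (o TL TE), loi (o TL TP), loi (o TE TL) & loi (o TE TP)]].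
Proof.
have := Hsa; rewrite /sa => /andP [/eqP h1 /andP [/eqP h2 /andP [/eqP h3 /andP [/allP h4
  /andP [h5 /andP [h6 /andP [h7 h8]]]]]]].
split; [exact: h1 | exact: h2 | exact: h3 | | by split].
move=> b; have hb : b \in allty by case: b.
by have /eqP := h4 b hb.
Qed.

Lemma oLL : o TL TL = OL. Proof. by case: of_sa. Qed.
Lemma oLG : o TL TG = OI. Proof. by case: of_sa. Qed.
Lemma oLM : o TL TM = OI. Proof. by case: of_sa. Qed.
Lemma oP b : o TP b = OI. Proof. by case: of_sa. Qed.
Lemma oL c : o TL c = OL \/ o TL c = OI.
Proof.
have [h1 h2 h3 _ [h5 h6 _ _]] := of_sa.
case: c; [exact: loiP|by left|by right|exact: loiP|by right].
Qed.
Lemma oM b : o TM b = OI.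
Proof. have := out_rev HP HL Hcan TP (trev b); rewrite trevK /= => ->; by rewrite oP. Qed.
Lemma oG b : o TG b = OG \/ o TG b = OI.
Proof. have := out_rev HP HL Hcan TL (trev b); rewrite trevK /= => ->; by case: (oL (trev b)) => ->; [left|right]. Qed.
Lemma oE b : b <> TE -> o TE b <> OE.
Proof.
have [_ _ _ _ [_ _ h7 h8]] := of_sa.
have r1 := out_rev HP HL Hcan TE TL; have r2 := out_rev HP HL Hcan TE TP; simpl in r1, r2.
by case: b => // _; [case: (loiP h7) => ->|rewrite r1; case: (loiP h7) => ->|case: (loiP h8) => ->|
  rewrite r2; case: (loiP h8) => ->].
Qed.

Lemma o_OE a b : o a b = OE -> a = TE /\ b = TE.
Proof.
case: a.
- case: b => //; move=> h; exfalso; exact: (oE _ h).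
- by case: (oL b) => ->.
- by case: (oG b) => ->.
- by rewrite oP.
- by rewrite oM.
Qed.

Definition dE := o TL TE == OL.
Definition cP := o TL TP == OL.

Lemma o_OL a b : a <> TE -> (o a b = OL <-> a = TL /\ (b = TL \/ (b = TE /\ dE) \/ (b = TP /\ cP))).
Proof.
rewrite /dE /cP; case: a => // _.
- case: b.
  + split => [h|[_ [//|[[_ /eqP h]|[//]]]]]; [split => //; right; left; split => //; by rewrite h | exact h].
  + by rewrite oLL; split => // _; split => //; left.
  + by rewrite oLG; split => // [[_ [//|[[//]|[//]]]]].
  + split => [h|[_ [//|[[//]|[_ /eqP h]]]]]; [split => //; right; right; split => //; by rewrite h | exact h].
  + by rewrite oLM; split => // [[_ [//|[[//]|[//]]]]].
- by case: (oG b) => ->; split => //; case.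
- by rewrite oP; split => //; case.
- by rewrite oM; split => //; case.
Qed.

Lemma oEE : o TE TE = OE.
Proof. rewrite /out; have /typ_TE e := repP HP HL TE; rewrite e; exact: otyp_eq. Qed.

Definition Ab (b : P -> P) x y :=
  strict le x y \/ (dE /\ x = y) \/ (cP /\ incomp le x y /\ prec (b x) (b y)).

Lemma step k (u v : 'I_k -> P) (c : P -> P -> P) (b : P -> P) (g : P -> P -> P) :
  pol2 R g -> injp g u v ->
  (forall l l', u l = u l' -> v l = v l' -> c (u l) (v l) = c (u l') (v l')) ->
  is_aut1 le b -> pol2 R (fun x y => b (c x y)) ->
  let h := fun x y => f (g x y) (b (c x y)) in
  [/\ pol2 R h, injp h u v & forall l l',
    strict le (h (u l) (v l)) (h (u l') (v l')) <->
    strict le (g (u l) (v l)) (g (u l') (v l')) /\ Ab b (c (u l) (v l)) (c (u l') (v l'))].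
Proof.
move=> Hg Hi Hc Hb Hbc h; split; first exact: (pol_comp Hpol Hg Hbc).
- move=> l l' /(otyp_eq le); rewrite /h (outP HP HL Hcan) => /o_OE [/typ_TE e _].
  exact: Hi e.
move=> l l'; rewrite -otyp_strictE /h (outP HP HL Hcan).
set x := g (u l) (v l); set x' := g (u l') (v l').
set z := c (u l) (v l); set z' := c (u l') (v l').
case: (classic (typ le prec x x' = TE)) => [hE|hE].
- have e := proj1 (typ_TE _ _) hE.
  have [eu ev] := Hi _ _ e.
  have ez : z = z' by exact: Hc.
  have -> : typ le prec (b z) (b z') = TE by apply/typ_TE; rewrite ez.
  rewrite hE oEE; split => //; case=> [[_ ne] _]; by case: ne.
rewrite (o_OL _ hE) typ_TL; apply: and_iff_compat_l.
rewrite /Ab typ_TL (aut_strict _ _ Hb) typ_TE (aut_eq _ _ Hb) typ_TP (aut_incomp _ _ Hb).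
tauto.
Qed.

Lemma iter k (u v : 'I_k -> P) (c : P -> P -> P) (g0 : P -> P -> P) :
  (forall b, is_aut1 le b -> pol2 R (fun x y => b (c x y))) ->
  (forall l l', u l = u l' -> v l = v l' -> c (u l) (v l) = c (u l') (v l')) ->
  pol2 R g0 -> injp g0 u v ->
  exists g, [/\ pol2 R g, injp g u v & forall l l',
    strict le (g (u l) (v l)) (g (u l') (v l')) <->
    strict le (g0 (u l) (v l)) (g0 (u l') (v l')) /\
    (strict le (c (u l) (v l)) (c (u l') (v l')) \/ (dE /\ c (u l) (v l) = c (u l') (v l')))].
Proof.
move=> Hcb Hc Hg0 Hi0.
pose z l := c (u l) (v l).
pose S (g : P -> P -> P) l l' := strict le (g (u l) (v l)) (g (u l') (v l')).
have Hid : is_aut1 le id := aut_id le.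
have [Hg1 Hi1 Hs1] := step (b := id) Hg0 Hi0 Hc Hid (Hcb _ Hid).
set g1 := (fun x y => f (g0 x y) (id (c x y))) in Hg1 Hi1 Hs1.
have claim : forall s : seq ('I_k * 'I_k), exists g, [/\ pol2 R g, injp g u v,
    (forall l l', S g l l' -> S g1 l l'),
    (forall l l', S g0 l l' -> (strict le (z l) (z l') \/ (dE /\ z l = z l')) -> S g l l') &
    (forall p, p \in s -> incomp le (z p.1) (z p.2) -> ~ S g p.1 p.2)].
  elim=> [|[i j] s [g [Hg Hi I1 I2 I3]]].
  - exists g1; split => //.
    move=> l l' h1 h2; apply/Hs1; split => //; rewrite /Ab; tauto.
  - have [b [Hb Hbp]] : exists b, is_aut1 le b /\ (incomp le (z i) (z j) -> prec (b (z j)) (b (z i))).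
      case: (classic (incomp le (z i) (z j))) => hij.
      + have [b [Hb Hbp]] := flip HP HL (z := z) (i := i) (j := j) hij; by exists b.
      + by exists id.
    have [Hh Hih Hsh] := step (b := b) Hg Hi Hc Hb (Hcb _ Hb).
    exists (fun x y => f (g x y) (b (c x y))); split => //.
    + move=> l l' /Hsh [h _]; exact: I1.
    + move=> l l' h1 h2; apply/Hsh; split; first exact: I2.
      rewrite /Ab; tauto.
    + move=> p; rewrite in_cons => /orP [/eqP ->|hp] hinc /Hsh [h1 h2] /=.
      * move: h2; rewrite /Ab /=; case=> [[h2 _]|[[_ e]|[_ [_ hp]]]].
        -- by case: hinc => h _; apply: h.
        -- by case: hinc => h _; apply: h; rewrite /z e; exact: (le_refl HP).
        -- exact: (prec_asym HL hp (Hbp hinc)).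
      * exact: (I3 p hp hinc h1).
have [g [Hg Hi I1 I2 I3]] := claim [seq (i, j) | i <- ord_enum k, j <- ord_enum k].
exists g; split => // l l'; split.
- move=> hS; have [h1 h2] := proj1 (Hs1 l l') (I1 _ _ hS); split => //.
  move: h2; rewrite /Ab; case=> [h|[h|[_ [hinc _]]]]; [by left | by right |].
  exfalso; apply: (I3 (l, l')) hinc hS.
  exact: (allpairs_f pair (mem_ord_enum l) (mem_ord_enum l')).
- move=> [h1 h2]; exact: I2.
Qed.
Lemma sa_main k (u v : 'I_k -> P) : exists g, [/\ pol2 R g, injp g u v & forall l l',
  strict le (g (u l) (v l)) (g (u l') (v l')) <->
  [/\ o (typ le prec (u l) (u l')) (typ le prec (v l) (v l')) = OL,
      strict le (v l) (v l') \/ (dE /\ v l = v l') &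
      strict le (u l) (u l') \/ (dE /\ u l = u l')]].
Proof.
have Hi0 : injp f u v.
  move=> l l' /(otyp_eq le); rewrite (outP HP HL Hcan) => /o_OE [/typ_TE e1 /typ_TE e2]; by split.
have [g1 [Hg1 Hi1 Hs1]] := iter (c := fun x y => y) (fun b Hb => pol_pr2 HP HR Hb)
  (fun l l' _ e => e) Hpol Hi0.
have [g2 [Hg2 Hi2 Hs2]] := iter (c := fun x y => x) (fun b Hb => pol_pr1 HP HR Hb)
  (fun l l' e _ => e) Hg1 Hi1.
exists g2; split => // l l'; rewrite Hs2 Hs1 -otyp_strictE (outP HP HL Hcan).
split; [case=> [[h1 h2] h3]; by split | case=> h1 h2 h3; by split].
Qed.

Lemma sa_result elt ele : emb_lt le elt -> emb_le le ele -> pol2 R elt \/ pol2 R ele.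
Proof.
move=> Hlt Hle.
have oTL : forall x y, strict le x y -> typ le prec x y = TL by move=> x y /typ_TL.
have oTE : forall x y, x = y -> typ le prec x y = TE by move=> x y /typ_TE.
case hd : dE.
- case he : (o TE TL == OL).
  + right; apply: (ele_from HP HR Hle) => k u v.
    have [g [Hg Hi Hs]] := sa_main u v; exists g; split => //; split => // l l'; rewrite Hs; split.
    * case=> h1 h2 h3; split; [|split].
      -- by case: h3 => [[h _]|[_ ->]]; [|exact: (le_refl HP)].
      -- by case: h2 => [[h _]|[_ ->]]; [|exact: (le_refl HP)].
      -- case=> e1 e2; move: h1; by rewrite (oTE _ _ e1) (oTE _ _ e2) oEE.
    * case=> h1 [h2 h3].
      have [e1|s1] := proj1 (le_iff HP _ _) h1; have [e2|s2] := proj1 (le_iff HP _ _) h2.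
      -- by case: h3.
      -- split; [by rewrite (oTE _ _ e1) (oTL _ _ s2); apply/eqP | by left | by right].
      -- split; [by rewrite (oTL _ _ s1) (oTE _ _ e2); apply/eqP | by right | by left].
      -- split; [by rewrite (oTL _ _ s1) (oTL _ _ s2) oLL | by left | by left].
  + have G25 : forall k (u v : 'I_k -> P), exists g, [/\ pol2 R g, injp g u v & forall l l',
        strict le (g (u l) (v l)) (g (u l') (v l')) <->
        strict le (u l) (u l') /\ (strict le (v l) (v l') \/ v l = v l')].
      move=> k u v; have [g [Hg Hi Hs]] := sa_main u v; exists g; split => // l l'; rewrite Hs; split.
      * case=> h1 h2 h3; case: h3 => [h3|[_ e1]].
        -- by split => //; case: h2 => [h|[_ h]]; [left|right].
        -- exfalso; move: h1; rewrite (oTE _ _ e1).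
           case: h2 => [s2|[_ e2]]; [rewrite (oTL _ _ s2) => h; move: he; by rewrite h|by rewrite (oTE _ _ e2) oEE].
      * case=> s1 [s2|e2]; split; try by left.
        -- by rewrite (oTL _ _ s1) (oTL _ _ s2) oLL.
        -- by rewrite (oTL _ _ s1) (oTE _ _ e2); apply/eqP.
        -- by right.
    left; apply: (elt_from HP HR Hlt) => k u v.
    have [g1 [Hg1 Hi1 Hs1]] := G25 k v u.
    pose w l := g1 (v l) (u l).
    have [g2 [Hg2 Hi2 Hs2]] := G25 k u w.
    exists (fun x y => g2 x (g1 y x)); split; [|split].
    * exact: (pol_comp Hg2 (pol_pr1 HP HR (aut_id le)) (pol_swap Hg1)).
    * move=> l l' /Hi2 [e1 e2]; have [e3 e4] := Hi1 _ _ e2; by split.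
    * move=> l l'; rewrite (Hs2 l l') (Hs1 l l'); split.
      -- case=> s1 [[s2 _]|e2]; split => //.
         have [e3 e4] := Hi1 _ _ e2; exfalso; case: s1 => _; by apply.
      -- case=> s1 s2; split => //; by left; split => //; left.
- left; apply: (elt_from HP HR Hlt) => k u v.
  have [g [Hg Hi Hs]] := sa_main u v; exists g; split => //; split => // l l'; rewrite Hs; split.
  + case=> _ h h'; case: h => [h|[hd' _]]; last by rewrite hd in hd'.
    case: h' => [h'|[hd' _]]; last by rewrite hd in hd'.
    by split.
  + case=> s1 s2; split; [by rewrite (oTL _ _ s1) (oTL _ _ s2) oLL | by left | by left].
Qed.
End SA.


Section Fin.
Variables (P : Type) (le prec : P -> P -> Prop).
Hypothesis HP : random_poset le.
Hypothesis HL : random_poset_linext le prec.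

Lemma otyp_OI a b : otyp le a b = OI -> incomp le a b.
Proof. by case: (otypP le a b) => // h1 h2 _; split. Qed.

Lemma typ_incomp x y : incomp le x y -> typ le prec x y = TP \/ typ le prec x y = TM.
Proof.
case=> h1 h2; case: typP => //; try (by left); try (by right); move=> *; exfalso; subst; eauto using (le_refl HP).
Qed.

Lemma dom_of f : canonical2 le prec f -> dom1 (out HP HL f) -> dominated_first le f.
Proof.
move=> Hc /andP [/allP h1 /allP h2] x y x' y'; split.
- move=> hs; apply/(otyp_strictE le); rewrite (outP HP HL Hc) (proj2 (typ_TL le prec _ _) hs).
  apply/eqP; apply: h1; by case: (typ le prec y y').
- move=> hi; apply: otyp_OI; rewrite (outP HP HL Hc).
  have hP : forall b, out HP HL f TP b = OI by move=> b; apply/eqP; apply: h2; case: b.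
  case: (typ_incomp hi) => ->; first exact: hP.
  have := out_rev HP HL Hc TP (trev (typ le prec y y')); rewrite trevK /= => ->; by rewrite hP.
Qed.

Unset Implicit Arguments.
Variables (I : Type) (ar : I -> nat) (R : forall i, ('I_(ar i) -> P) -> Prop).
Set Implicit Arguments.
Hypothesis HR : forall i, fo_definable le (R i).
Hypothesis Hlt : pp_definable R (binrel (strict le)).
Hypothesis Hinc : pp_definable R (binrel (incomp le)).

Section G.
Variable f : P -> P -> P.
Hypothesis Hcan : canonical2 le prec f.
Hypothesis Hpol : pol2 R f.
Local Notation o := (out HP HL f).

Lemma kLL : o TL TL = OL.
Proof. apply: otyp_strict; apply: (f_strict Hpol Hlt); exact: rep_strict. Qed.
Lemma rep_inc t : t = TP \/ t = TM -> incomp le (rep HP HL t).1 (rep HP HL t).2.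
Proof. move=> ht; have := repP HP HL t; by case: ht => ->; case: typP => // h1 h2 _; split. Qed.
Lemma kPP : o TP TP = OI.
Proof. apply: (otyp_incomp HP); apply: (f_incomp Hpol Hinc); apply: rep_inc; by left. Qed.
Lemma kPM : o TP TM = OI.
Proof. apply: (otyp_incomp HP); apply: (f_incomp Hpol Hinc); apply: rep_inc; [by left|by right]. Qed.
Lemma kEE : o TE TE = OE.
Proof. rewrite /out; have /(typ_TE prec HP) e := repP HP HL TE; rewrite e; exact: otyp_eq. Qed.

Definition vf := [:: o TE TL; o TE TP; o TL TE; o TL TG; o TL TP; o TL TM; o TP TE; o TP TL; o TP TG].

Lemma out_mk a b : o a b = mktab vf a b.
Proof.
have r := out_rev HP HL Hcan.
case: a; case: b => //=; rewrite ?kLL ?kPP ?kPM ?kEE //.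
all: first [exact (r TE TL) | exact (r TE TP) | exact (r TL TE) | exact (r TL TG) | exact (r TL TM)
  | exact (r TL TP) | exact (r TP TE) | exact (r TP TG) | exact (r TP TL)
  | by rewrite (r TP TM) kPM | by rewrite (r TP TP) kPP | by rewrite (r TL TL) kLL].
Qed.

Lemma good_f : good' o.
Proof.
have Emk : o = mktab vf.
  apply: functional_extensionality => a; apply: functional_extensionality => b; exact: out_mk.
have := lall9P classify (o TE TL) (o TE TP) (o TL TE) (o TL TG) (o TL TP) (o TL TM) (o TP TE) (o TP TL) (o TP TG).
rewrite -/vf -Emk.
have -> : lall (check6 o) cfgT = true.
  rewrite lallE -cfgT_eq all_map; move: cfgs_valid; elim: cfgs => //= c s IH /andP [hc hs].
  apply/andP; split; [exact: (cfg_sound HP HL Hcan hc) | exact: IH].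
done.
Qed.
End G.

Lemma main (f elt ele : P -> P -> P) : canonical2 le prec f -> pol2 R f ->
  emb_lt le elt -> emb_le le ele -> dominated le f \/ pol2 R elt \/ pol2 R ele.
Proof.
move=> Hcan Hpol Hel Hee.
pose g := fun x y => f y x.
have Hcang : canonical2 le prec g.
  move=> s hs a1 a2 h1 h2 d1 d2; have [b [Hb Hbl]] := Hcan s hs a2 a1 h2 h1 d2 d1.
  by exists b.
have Hpolg : pol2 R g := pol_swap Hpol.
have Eg : out HP HL g = swaptab (out HP HL f) by [].
have := good_f Hcan Hpol; rewrite /good'.
case h1 : (dom1 (out HP HL f)); first by move=> _; left; left; exact: dom_of.
case h2 : (dom1 (swaptab (out HP HL f))).
  move=> _; left; right; apply: (dom_of Hcang); by rewrite Eg.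
case h3 : (sa (out HP HL f)) => h4.
  right; exact: (sa_result HR Hcan Hpol h3 Hel Hee).
right; rewrite -Eg in h4; exact: (sa_result HR Hcang Hpolg h4 Hel Hee).
Qed.
End Fin.

Unset Implicit Arguments.
Theorem theorem36 (P : Type) (le prec : P -> P -> Prop)
  (I : Type) (ar : I -> nat) (R : forall i : I, ('I_(ar i) -> P) -> Prop)
  (e_lt e_le f : P -> P -> P) :
  random_poset le ->
  random_poset_linext le prec ->
  (forall i, fo_definable le (R i)) ->
  pp_definable R (binrel (strict le)) ->
  pp_definable R (binrel (incomp le)) ->
  emb_lt le e_lt ->
  emb_le le e_le ->
  pol2 R f ->
  canonical2 le prec f ->
  dominated le f \/ pol2 R e_lt \/ pol2 R e_le.
Proof.
move=> HP HL HR Hlt Hinc Hel Hee Hpol Hcan.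
exact: (main HP HL HR Hlt Hinc Hcan Hpol Hel Hee).
Qed.
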